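(* Let $P$, $P'$ and $Q$ be transition matrices on the finite set $S$, all reversible with respect to $\pi$, with $P$ and $P'$ irreducible, and let $0<a<1$. Then $P'$ efficiency-dominates $P$ if and only if $aP'+(1-a)Q$ efficiency-dominates $aP+(1-a)Q$.
   Context: $S$ is a finite set, and $\pi$ is a probability distribution on $S$ with $\pi(x)>0$ for all $x$. A transition matrix $P$ is reversible with respect to $\pi$ if $\pi(x)P(x,y)=\pi(y)P(y,x)$ for all $x,y$; irreducible if every state can be reached from every other with positive probability in some number of steps. For a Markov chain $X_1,X_2,\dots$ with transition matrix $P$ and $X_1\sim\pi$, $v(f,P)=\lim_{N\to\infty}\frac1N\mathrm{Var}\big(\sum_{i=1}^N f(X_i)\big)$. $P$ efficiency-dominates $Q$ if $v(f,P)\le v(f,Q)$ for all $f:S\to\mathbb R$. *)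

(* Defs.v *)
From HB Require Import structures.
From mathcomp Require Import all_boot all_order all_algebra.
From mathcomp Require Import all_classical all_reals all_analysis.
Set Implicit Arguments. Unset Strict Implicit. Unset Printing Implicit Defensive.
Import Order.TTheory GRing.Theory Num.Theory.
Import numFieldNormedType.Exports.
Local Open Scope ring_scope.

Section MarkovDefs.
Variables (R : realType) (S : finType).

Definition is_distribution (pi : S -> R) : Prop :=
  (forall x, 0 < pi x) /\ \sum_(x : S) pi x = 1.

Definition is_transition (P : S -> S -> R) : Prop :=
  (forall x y, 0 <= P x y) /\ (forall x, \sum_(y : S) P x y = 1).

Definition reversible (pi : S -> R) (P : S -> S -> R) : Prop :=
  forall x y, pi x * P x y = pi y * P y x.

Fixpoint mpow (P : S -> S -> R) (n : nat) : S -> S -> R :=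
  match n with
  | 0 => fun x y => if x == y then 1 else 0
  | n'.+1 => fun x y => \sum_(z : S) mpow P n' x z * P z y
  end.

Definition irreducible (P : S -> S -> R) : Prop :=
  forall x y, exists n, 0 < mpow P n x y.

(* probability of the trajectory (X_1,...,X_N) = (w 0, ..., w (N-1))
   for the chain with transition matrix P started from X_1 ~ pi *)
Definition path_prob (pi : S -> R) (P : S -> S -> R) (N : nat)
  (w : {ffun 'I_N -> S}) : R :=
  \prod_(i < N) (match val i with
                 | 0 => pi (w i)
                 | k.+1 => oapp (fun j : 'I_N => P (w j) (w i)) 0 (insub k)
                 end).

Definition pathE (pi : S -> R) (P : S -> S -> R) (N : nat)
  (g : {ffun 'I_N -> S} -> R) : R :=
  \sum_(w : {ffun 'I_N -> S}) path_prob pi P w * g w.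

Definition var_sum (pi : S -> R) (P : S -> S -> R) (f : S -> R) (N : nat) : R :=
  let Sf := fun w : {ffun 'I_N -> S} => \sum_(i < N) f (w i) in
  pathE pi P (fun w => (Sf w) ^+ 2) - (pathE pi P Sf) ^+ 2.

Definition asymp_var (pi : S -> R) (P : S -> S -> R) (f : S -> R) : R :=
  limn (fun N : nat => var_sum pi P f N / N%:R : R).

Definition eff_dominates (pi : S -> R) (P Q : S -> S -> R) : Prop :=
  forall f : S -> R, asymp_var pi P f <= asymp_var pi Q f.

Definition mix (a : R) (P Q : S -> S -> R) : S -> S -> R :=
  fun x y => a * P x y + (1 - a) * Q x y.

End MarkovDefs.

(* Main.v *)
Require Import Defs.
From HB Require Import structures.
From mathcomp Require Import all_boot all_order all_algebra.
From mathcomp Require Import all_classical all_reals all_analysis.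
From mathcomp Require Import ring lra.
Import Order.TTheory GRing.Theory Num.Theory.
Import numFieldNormedType.Exports.
Set Implicit Arguments. Unset Strict Implicit. Unset Printing Implicit Defensive.
Local Open Scope ring_scope.

Lemma lin_solve (K : fieldType) (V : vectType K) (f : {linear V -> V})
  (m : {linear V -> K^o}) (v1 : V) :
  m v1 != 0 ->
  (forall v, f v = 0 -> v \in <[v1]>%VS) ->
  (forall v, m (f v) = 0) ->
  forall x, m x = 0 -> exists g, f g = x.
Proof.
move=> mv1 kerf imf x mx.
pose Lf := linfun f; pose mf := linfun m.
have h1 := limg_ker_dim Lf fullv.
have h2 := limg_ker_dim mf fullv.
rewrite capfv in h1; rewrite capfv in h2.
have k1 : (\dim (lker Lf) <= 1)%N.
  have : (lker Lf <= <[v1]>)%VS.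
    by apply/subvP => v; rewrite memv_ker lfunE => /eqP /kerf.
  move/dimvS; rewrite dim_vline; case: (v1 != 0) => //= H.
  by apply: leq_trans H _.
have k2 : (1 <= \dim (mf @: fullv))%N.
  have : (<[m v1]> <= mf @: fullv)%VS.
    by rewrite -memvE -(lfunE m) memv_img ?memvf.
  by move/dimvS; rewrite dim_vline mv1.
have sub : (Lf @: fullv <= lker mf)%VS.
  apply/subvP => w /memv_imgP [u _ ->].
  by rewrite memv_ker !lfunE /= imf.
have le : (\dim (lker mf) <= \dim (Lf @: fullv))%N.
  rewrite -(leq_add2r (\dim (mf @: fullv))) h2 -h1 addnC leq_add //.
  by apply: leq_trans k1 k2.
have [_ eqUV] := dimv_leqif_eq sub.
have /eqP E : (Lf @: fullv == lker mf)%VS by rewrite -eqUV eqn_leq le dimvS.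
have : x \in lker mf by rewrite memv_ker lfunE /= mx.
rewrite -E => /memv_imgP [u _ ->]; exists u; by rewrite lfunE.
Qed.

Section Basic.
Variables (R : realType) (S : finType) (pi : S -> R) (K : S -> S -> R).
Hypothesis Hpi : is_distribution pi.
Hypothesis HK : is_transition K.
Hypothesis HrK : reversible pi K.

Definition dot (u v : S -> R) := \sum_(x : S) pi x * u x * v x.
Definition Top (h : S -> R) : S -> R := fun x => \sum_(y : S) K x y * h y.

Lemma stat y : \sum_(x : S) pi x * K x y = pi y.
Proof.
under eq_bigr do rewrite HrK.
by rewrite -mulr_sumr HK.2 mulr1.
Qed.

Lemma selfadj u v : dot u (Top v) = dot (Top u) v.
Proof.
rewrite /dot /Top.
under eq_bigr do rewrite mulr_sumr.
under [RHS]eq_bigr do rewrite mulr_sumr mulr_suml.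
rewrite exchange_big /=.
apply: eq_bigr => x _; apply: eq_bigr => y _.
rewrite [LHS](_ : _ = (pi y * K y x) * (u y * v x)); last ring.
by rewrite HrK; ring.
Qed.

Lemma Top_const c : Top (fun _ => c) = (fun _ => c).
Proof. by apply: funext => x; rewrite /Top -mulr_suml HK.2 mul1r. Qed.

Lemma dot_sym u v : dot u v = dot v u.
Proof. by apply: eq_bigr => x _; ring. Qed.

Lemma dot1T h : dot (fun _ => 1) (Top h) = dot (fun _ => 1) h.
Proof. by rewrite selfadj Top_const. Qed.

Lemma TopB u v : Top (fun x => u x - v x) = fun x => Top u x - Top v x.
Proof.
apply: funext => x; rewrite /Top -sumrB; apply: eq_bigr => y _ /=; ring.
Qed.

Lemma TopD u v : Top (fun x => u x + v x) = fun x => Top u x + Top v x.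
Proof.
apply: funext => x; rewrite /Top -big_split; apply: eq_bigr => y _ /=; ring.
Qed.

Lemma dotBr u v w : dot u (fun x => v x - w x) = dot u v - dot u w.
Proof. rewrite /dot -sumrB; apply: eq_bigr => y _ /=. ring. Qed.
Lemma dotBl u v w : dot (fun x => v x - w x) u = dot v u - dot w u.
Proof. rewrite /dot -sumrB; apply: eq_bigr => y _ /=. ring. Qed.

Definition qf (h : S -> R) := dot h h - dot h (Top h).

Lemma qf_ge0 h : 0 <= qf h.
Proof.
rewrite /qf subr_ge0 /dot /Top.
have eA : \sum_x \sum_y pi x * K x y * (h x * h x) = \sum_x pi x * h x * h x.
  apply: eq_bigr => x _; rewrite -big_distrl /= -big_distrr /= HK.2; ring.
have eB : \sum_x \sum_y pi x * K x y * (h y * h y) = \sum_x pi x * h x * h x.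
  rewrite exchange_big; apply: eq_bigr => y _; rewrite -big_distrl /= stat; ring.
have eL : \sum_x pi x * h x * (\sum_y K x y * h y) =
          \sum_x \sum_y pi x * K x y * (h x * h y).
  apply: eq_bigr => x _; rewrite big_distrr /=; apply: eq_bigr => y _; ring.
rewrite eL.
apply: (@le_trans _ _ (\sum_x \sum_y (pi x * K x y * (h x * h x) + pi x * K x y * (h y * h y)) / 2)).
  apply: ler_sum => x _; apply: ler_sum => y _.
  have p0 : 0 <= pi x * K x y by apply: mulr_ge0; [apply: ltW; apply: Hpi.1 | apply: HK.1].
  have := mulr_ge0 p0 (sqr_ge0 (h x - h y)).
  nra.
have -> : \sum_x \sum_y (pi x * K x y * (h x * h x) + pi x * K x y * (h y * h y)) / 2
   = (\sum_x \sum_y pi x * K x y * (h x * h x) + \sum_x \sum_y pi x * K x y * (h y * h y)) / 2.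
  rewrite -big_split /= mulr_suml; apply: eq_bigr => x _.
  by rewrite -big_split /= mulr_suml.
rewrite eA eB; lra.
Qed.

End Basic.

Section Paths.
Variables (R : realType) (S : finType) (pi : S -> R) (K : S -> S -> R).

Definition ext n (w : {ffun 'I_n.+1 -> S}) (y : S) : {ffun 'I_n.+2 -> S} :=
  [ffun i : 'I_n.+2 => if ((i : nat) < n.+1)%N then w (inord i) else y].

Lemma ext_lt n (w : {ffun 'I_n.+1 -> S}) y (i : 'I_n.+2) (j : 'I_n.+1) :
  (i : nat) = j -> ext w y i = w j.
Proof.
move=> E; rewrite ffunE E ltn_ord; congr (w _); apply: val_inj; rewrite /= inordK //.
Qed.

Lemma ext_max n (w : {ffun 'I_n.+1 -> S}) y : ext w y ord_max = y.
Proof. by rewrite ffunE /= ltnn. Qed.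

Lemma oapp_insub N (F : 'I_N -> R) k (hk : (k < N)%N) :
  oapp F 0 (insub k) = F (Ordinal hk).
Proof. by rewrite insubT. Qed.

Lemma path_prob_ext n (w : {ffun 'I_n.+1 -> S}) y :
  path_prob pi K (ext w y) = path_prob pi K w * K (w ord_max) y.
Proof.
rewrite /path_prob big_ord_recr /=.
congr (_ * _).
  apply: eq_bigr => -[[|k] hk] _ /=.
    by congr (pi _); apply: ext_lt.
  have hk1 : (k < n.+2)%N by apply: ltn_trans (ltnW hk) _.
  have hk2 : (k < n.+1)%N by apply: ltnW.
  rewrite (oapp_insub _ hk1) (oapp_insub _ hk2) /=.
  by rewrite (@ext_lt _ _ _ _ (Ordinal hk2)) // (@ext_lt _ _ _ _ (Ordinal hk)).
have hk1 : (n < n.+2)%N by apply: ltnW.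
rewrite (oapp_insub _ hk1) /= ext_max.
by rewrite (@ext_lt _ _ _ _ ord_max).
Qed.

Lemma sum_split n (F : {ffun 'I_n.+2 -> S} -> R) :
  \sum_(w' : {ffun 'I_n.+2 -> S}) F w' =
  \sum_(w : {ffun 'I_n.+1 -> S}) \sum_(y : S) F (ext w y).
Proof.
rewrite pair_big /=.
pose tr (w' : {ffun 'I_n.+2 -> S}) :=
  ([ffun j : 'I_n.+1 => w' (widen_ord (leqnSn _) j)], w' ord_max).
rewrite (reindex (fun p : {ffun 'I_n.+1 -> S} * S => ext p.1 p.2)) //=.
exists tr => [[w y] _ | w' _].
  rewrite /tr ext_max; congr (_, _); apply/ffunP => j.
  by rewrite ffunE (@ext_lt _ _ _ _ j).
apply/ffunP => i; rewrite /tr ffunE /=.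
case: ifP => hi.
  by rewrite ffunE; congr (w' _); apply: val_inj; rewrite /= inordK.
congr (w' _); apply: val_inj => /=.
by have := ltn_ord i; rewrite ltnS leq_eqVlt hi orbF => /eqP.
Qed.

Lemma pathE_rec n (g : {ffun 'I_n.+2 -> S} -> R) :
  pathE pi K g = pathE pi K (fun w : {ffun 'I_n.+1 -> S} =>
     \sum_(y : S) K (w ord_max) y * g (ext w y)).
Proof.
rewrite /pathE sum_split; apply: eq_bigr => w _.
rewrite big_distrr; apply: eq_bigr => y _ /=.
by rewrite path_prob_ext mulrA.
Qed.

Lemma pathE1 (g : {ffun 'I_1 -> S} -> R) :
  pathE pi K g = \sum_(x : S) pi x * g [ffun => x].
Proof.
rewrite /pathE (reindex (fun x : S => [ffun => x] : {ffun 'I_1 -> S})) /=.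
  apply: eq_bigr => x _; congr (_ * _).
  by rewrite /path_prob big_ord1 /= ffunE.
exists (fun w : {ffun 'I_1 -> S} => w ord0) => [x _ | w _]; first by rewrite ffunE.
by apply/ffunP => i; rewrite ffunE (ord1 i).
Qed.

End Paths.

Section Var.
Variables (R : realType) (S : finType) (pi : S -> R) (K : S -> S -> R).
Hypothesis Hpi : is_distribution pi.
Hypothesis HK : is_transition K.
Hypothesis HrK : reversible pi K.

Local Notation T := (Top K).
Local Notation dt := (dot pi).
Local Notation one := (fun _ : S => 1 : R).

Lemma pathE_eq n (g1 g2 : {ffun 'I_n -> S} -> R) :
  (forall w, g1 w = g2 w) -> pathE pi K g1 = pathE pi K g2.
Proof. by move=> E; apply: eq_bigr => w _; rewrite E. Qed.

Lemma pathED n (g1 g2 : {ffun 'I_n -> S} -> R) :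
  pathE pi K (fun w => g1 w + g2 w) = pathE pi K g1 + pathE pi K g2.
Proof. by rewrite /pathE -big_split; apply: eq_bigr => w _; rewrite mulrDr. Qed.

Lemma pathEZ n c (g1 : {ffun 'I_n -> S} -> R) :
  pathE pi K (fun w => c * g1 w) = c * pathE pi K g1.
Proof. by rewrite /pathE big_distrr; apply: eq_bigr => w _ /=; ring. Qed.

Lemma pathE_last n h :
  pathE pi K (fun w : {ffun 'I_n.+1 -> S} => h (w ord_max)) = dt one h.
Proof.
elim: n h => [|n IH] h.
  rewrite pathE1; apply: eq_bigr => x _; by rewrite ffunE mulr1.
rewrite pathE_rec (@pathE_eq _ _ (fun w => T h (w ord_max))); first by rewrite IH (dot1T HK HrK).
by move=> w; apply: eq_bigr => y _; rewrite ext_max.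
Qed.

Lemma pathE_const n c : pathE pi K (fun w : {ffun 'I_n.+1 -> S} => c) = c.
Proof.
rewrite (@pathE_eq _ _ (fun w => (fun _ => c) (w ord_max))) // pathE_last.
rewrite /dot (eq_bigr (fun x => pi x * c)) => [|x _]; last by rewrite mulr1.
by rewrite -big_distrl /= Hpi.2 mul1r.
Qed.

Definition Sf n (f : S -> R) (w : {ffun 'I_n -> S}) := \sum_(i < n) f (w i).

Lemma Sf_ext n f (w : {ffun 'I_n.+1 -> S}) y : Sf f (ext w y) = Sf f w + f y.
Proof.
rewrite /Sf big_ord_recr /= ext_max; congr (_ + _).
by apply: eq_bigr => i _; rewrite (@ext_lt _ _ _ _ _ i).
Qed.

Lemma pathE_C x n h :
  pathE pi K (fun w : {ffun 'I_n.+1 -> S} => Sf x w * h (w ord_max)) =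
  \sum_(k < n.+1) dt x (iter k T h).
Proof.
elim: n h => [|n IH] h.
  rewrite pathE1 big_ord1 /=; apply: eq_bigr => s _.
  by rewrite /Sf big_ord1 !ffunE; ring.
rewrite pathE_rec.
rewrite (@pathE_eq _ _ (fun w => Sf x w * T h (w ord_max) +
            (fun s => T (fun t => x t * h t) s) (w ord_max))); last first.
  move=> w; rewrite /Top mulr_sumr -big_split; apply: eq_bigr => y _ /=.
  by rewrite Sf_ext ext_max; ring.
rewrite pathED IH pathE_last (dot1T HK HrK) [RHS]big_ord_recl /= addrC; congr (_ + _).
  by apply: eq_bigr => s _ /=; ring.
by apply: eq_bigr => k _; rewrite /= add0n -iterS iterSr.
Qed.

Lemma pathE_B x n :
  pathE pi K (fun w : {ffun 'I_n.+2 -> S} => Sf x w ^+ 2) =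
  pathE pi K (fun w : {ffun 'I_n.+1 -> S} => Sf x w ^+ 2) +
  2 * pathE pi K (fun w : {ffun 'I_n.+1 -> S} => Sf x w * T x (w ord_max)) +
  dt x x.
Proof.
rewrite pathE_rec.
rewrite (@pathE_eq _ _ (fun w => (Sf x w ^+ 2 + 2 * (Sf x w * T x (w ord_max))) +
            (fun s => T (fun t => x t * x t) s) (w ord_max))); last first.
  move=> w; rewrite /Top.
  have -> : Sf x w ^+ 2 = \sum_y K (w ord_max) y * Sf x w ^+ 2.
    by rewrite -big_distrl /= HK.2 mul1r.
  rewrite mulr_sumr mulr_sumr -!big_split; apply: eq_bigr => y _ /=.
  by rewrite Sf_ext; ring.
rewrite pathED pathED pathEZ pathE_last (dot1T HK HrK); congr (_ + _).
by apply: eq_bigr => s _; ring.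
Qed.

End Var.

Section LimAux.
Local Open Scope classical_set_scope.
Lemma lim_aux (R : realType) (u : nat -> R) (c B : R) :
  (forall n, `|u n.+1 - c| <= B / n.+1%:R) -> limn u = c.
Proof.
move=> Hb.
have H : [sequence u n.+1]_n @ \oo --> c.
  apply: (@squeeze_cvgr _ _ _ _ (fun n => c - B * harmonic n) (fun n => c + B * harmonic n)).
  - apply: nearW => n /=; have := Hb n; rewrite ler_norml /harmonic /=.
    set e := B / _; move=> /andP [h1 h2]; apply/andP; split; lra.
  - have := cvgB (cvg_cst c) (@cvgMl_tmp _ _ _ _ _ B _ (@cvg_harmonic R)).
    by rewrite mulr0 subr0; apply; exact: _.
  - have := cvgD (cvg_cst c) (@cvgMl_tmp _ _ _ _ _ B _ (@cvg_harmonic R)).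
    by rewrite mulr0 addr0; apply; exact: _.
move: H; rewrite cvg_shiftS => H.
by apply: cvg_lim.
Qed.
End LimAux.

Section Poisson.
Variables (R : realType) (S : finType) (pi : S -> R) (K : S -> S -> R).
Hypothesis Hpi : is_distribution pi.
Hypothesis HK : is_transition K.
Hypothesis HrK : reversible pi K.
Variables (x g : S -> R).
Hypothesis Hx0 : dot pi (fun _ => 1) x = 0.
Hypothesis Hg : forall s, g s - Top K g s = x s.

Local Notation T := (Top K).
Local Notation dt := (dot pi).

Definition acoef m := dt g (iter m T g).

Lemma xfun : x = fun s => g s - T g s.
Proof. by apply: funext => s; rewrite Hg. Qed.

Lemma iter_x m : iter m T x = fun s => iter m T g s - iter m.+1 T g s.
Proof.
elim: m => [|m IH] /=; first exact: xfun.
by rewrite IH TopB.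
Qed.

Lemma dxg m : dt x (iter m T g) = acoef m - acoef m.+1.
Proof.
rewrite {1}xfun dotBl /acoef /=; congr (_ - _).
by rewrite -(selfadj HrK).
Qed.

Lemma dxx m : dt x (iter m T x) =
  (acoef m - acoef m.+1) - (acoef m.+1 - acoef m.+2).
Proof. by rewrite iter_x dotBr !dxg. Qed.

Lemma Csum n : \sum_(k < n.+1) dt x (iter k T (T x)) =
  (acoef 1 - acoef 2) - (acoef n.+2 - acoef n.+3).
Proof.
rewrite (eq_bigr (fun k : 'I_n.+1 => dt x (iter k.+1 T x))) => [|k _]; last by rewrite iterSr.
elim: n => [|n IH]; first by rewrite big_ord1 dxx.
have E := dxx n.+2; simpl in E.
rewrite big_ord_recr IH /= E; ring.
Qed.

Definition cst := 2 * (acoef 1 - acoef 2) + dt x x.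

Lemma Bform n :
  pathE pi K (fun w : {ffun 'I_n.+1 -> S} => Sf x w ^+ 2) =
  dt x x + n%:R * cst - 2 * (acoef 2 - acoef n.+2).
Proof.
elim: n => [|n IH].
  rewrite pathE1 subrr mulr0 subr0 mul0r addr0 /dot.
  by apply: eq_bigr => s _; rewrite /Sf big_ord1 ffunE; ring.
rewrite (pathE_B HK HrK) IH (pathE_C HK HrK) Csum /cst -natr1; ring.
Qed.

Lemma Aform n :
  pathE pi K (fun w : {ffun 'I_n.+1 -> S} => Sf x w) = 0.
Proof.
have E := pathE_C HK HrK x n (fun _ => 1).
rewrite (@pathE_eq _ _ pi K _ _ (fun w => Sf x w * 1)); last by move=> w; rewrite mulr1.
rewrite E big1 // => k _.
have -> : iter k T (fun _ => 1) = fun _ => 1.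
  by elim: (k : nat) => [|k0 IH] //=; rewrite IH (Top_const HK).
by rewrite dot_sym Hx0.
Qed.

Lemma Vform n : var_sum pi K x n.+1 = dt x x + n%:R * cst - 2 * (acoef 2 - acoef n.+2).
Proof.
rewrite /var_sum /=.
have := Bform n; have := Aform n; rewrite /Sf => -> ->.
by rewrite expr2 mulr0 subr0.
Qed.

Lemma iterT_bound h m s : `|iter m T h s| <= \sum_t `|h t|.
Proof.
elim: m s => [|m IH] s /=.
  by rewrite (bigD1 s) //= lerDl sumr_ge0.
rewrite /Top (le_trans (ler_norm_sum _ _ _)) //.
rewrite -[X in _ <= X]mul1r -(HK.2 s) mulr_suml.
apply: ler_sum => t _; rewrite normrM ger0_norm ?HK.1 //.
by apply: ler_wpM2l; [apply: HK.1 | apply: IH].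
Qed.

Lemma acoef_bound m : `|acoef m| <= \sum_s pi s * `|g s| * \sum_t `|g t|.
Proof.
rewrite /acoef /dot (le_trans (ler_norm_sum _ _ _)) //.
apply: ler_sum => s _; rewrite normrM normrM (gtr0_norm (Hpi.1 s)).
by apply: ler_wpM2l; [apply: mulr_ge0; [apply: ltW; apply: Hpi.1| by []] | apply: iterT_bound].
Qed.

Lemma asymp_poisson : asymp_var pi K x = 2 * dt x g - dt x x.
Proof.
have -> : 2 * dt x g - dt x x = cst.
  have E0 := dxg 0; have E1 := dxx 0; simpl in E0, E1.
  rewrite /cst E1 E0; ring.
set Bd := \sum_s pi s * `|g s| * \sum_t `|g t|.
apply: (@lim_aux _ _ _ (`|dt x x - cst - 2 * acoef 2| + 2 * Bd)) => n.
rewrite Vform.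
have nz : n.+1%:R != 0 :> R by rewrite pnatr_eq0.
have -> : (dt x x + n%:R * cst - 2 * (acoef 2 - acoef n.+2)) / n.+1%:R - cst =
   (dt x x - cst - 2 * acoef 2 + 2 * acoef n.+2) / n.+1%:R.
  by rewrite -natr1; field; rewrite addrC natr1.
rewrite normrM (@ger0_norm _ (n.+1%:R^-1)); last by rewrite invr_ge0 ler0n.
apply: ler_wpM2r; first by rewrite invr_ge0 ler0n.
rewrite (le_trans (ler_normD _ _)) // lerD2l normrM ger0_norm ?ler0n //.
by apply: ler_wpM2l; [rewrite ler0n | apply: acoef_bound].
Qed.


End Poisson.

Section Solve.
Variables (R : realType) (S : finType) (pi : S -> R) (K : S -> S -> R).
Hypothesis Hpi : is_distribution pi.
Hypothesis HK : is_transition K.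
Hypothesis HrK : reversible pi K.
Hypothesis Hirr : irreducible K.

Local Notation T := (Top K).
Local Notation dt := (dot pi).

Lemma mpow_iter n h s : iter n T h s = \sum_y mpow K n s y * h y.
Proof.
elim: n h s => [|n IH] h s.
  rewrite /= (bigD1 s) //= eqxx mul1r big1 ?addr0 // => y.
  by rewrite eq_sym => /negbTE ->; rewrite mul0r.
rewrite iterSr IH /Top /=.
under eq_bigr do rewrite big_distrr /=.
under [RHS]eq_bigr do rewrite big_distrl /=.
rewrite exchange_big /=; apply: eq_bigr => z _; apply: eq_bigr => y _; ring.
Qed.

Lemma mpow_ge0 n s y : 0 <= mpow K n s y.
Proof.
elim: n s y => [|n IH] s y /=; first by case: (s == y).
by apply: sumr_ge0 => z _; apply: mulr_ge0 => //; apply: HK.1.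
Qed.

Lemma iter_const n c : iter n T (fun _ => c) = (fun _ => c).
Proof. by elim: n => [|n IH] //=; rewrite IH (Top_const HK). Qed.

Lemma mpow_sum1 n s : \sum_y mpow K n s y = 1.
Proof.
have := mpow_iter n (fun _ => 1) s; rewrite iter_const => ->.
by apply: eq_bigr => y _; rewrite mulr1.
Qed.

Lemma harmonic_const h : (forall s, h s = T h s) -> forall s t, h s = h t.
Proof.
move=> Hh s0.
have [x0 _ Hmax] := @arg_maxP _ _ S s0 predT h isT.
have hT : forall n, iter n T h = h.
  elim=> [|n IH] //=; rewrite IH; apply: funext => s; by rewrite -Hh.
suff E : forall y, h y = h x0 by move=> t; rewrite !E.
move=> y; have [n Hn] := Hirr x0 y.
have Z : \sum_z mpow K n x0 z * (h x0 - h z) = 0.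
  under eq_bigr do rewrite mulrBr.
  rewrite sumrB -big_distrl /= mpow_sum1 mul1r -mpow_iter hT subrr //.
have : mpow K n x0 y * (h x0 - h y) = 0.
  apply: (psumr_eq0P _ Z) => // z _; apply: mulr_ge0; first exact: mpow_ge0.
  by rewrite subr_ge0; apply: Hmax.
move/eqP; rewrite mulf_eq0 (gt_eqF Hn) /= subr_eq0 => /eqP ->. done.
Qed.

Lemma poisson_solve x : dt (fun _ => 1) x = 0 ->
  exists g, forall s, g s - T g s = x s.
Proof.
move=> Hx.
pose V := {ffun S -> R^o}.
pose f (v : V) : V := [ffun s => v s - T (fun t => v t) s].
pose m (v : V) : R^o := dt (fun _ => 1) (fun t => v t).
have fL : linear f.
  move=> a u v; apply/ffunP => s; rewrite !ffunE /Top.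
  under eq_bigr do rewrite !ffunE.
  rewrite /GRing.scale /=.
  under eq_bigr do rewrite mulrDr mulrCA.
  rewrite big_split /= -big_distrr /=; ring.
have mL : linear m.
  move=> a u v; rewrite /m /dot.
  under eq_bigr do rewrite !ffunE.
  rewrite /GRing.scale /= big_distrr -big_split /=; apply: eq_bigr => s _; ring.
pose fl : {linear V -> V} := HB.pack f (GRing.isLinear.Build _ _ _ _ f fL).
pose ml : {linear V -> R^o} := HB.pack m (GRing.isLinear.Build _ _ _ _ m mL).
have [s0 _] : exists s0 : S, true.
  case: (pickP (fun _ : S => true)) => [s _|H]; first by exists s.
  have := Hpi.2; rewrite big_pred0 // => H01.
  by have := @oner_neq0 R; rewrite -H01 eqxx.
destruct (@lin_solve R V fl ml [ffun => 1]) with (x := [ffun s => x s]) as [g Hg].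
- rewrite /= /m /dot.
  under eq_bigr do rewrite ffunE !mulr1.
  by rewrite Hpi.2 oner_neq0.
- move=> v /= /ffunP Hv; apply/vlineP; exists (v s0).
  have Hh : forall s, v s = T (fun t => v t) s.
    by move=> s; have := Hv s; rewrite !ffunE => /eqP; rewrite subr_eq0 => /eqP.
  apply/ffunP => s; rewrite !ffunE /GRing.scale /= mulr1.
  exact: (harmonic_const Hh).
- move=> v /=; rewrite /m /f.
  rewrite (_ : (fun t => [ffun s => v s - T [eta v] s] t) = (fun t => v t - T (fun t => v t) t)); last first.
    by apply: funext => t; rewrite ffunE.
  by rewrite dotBr (dot1T HK HrK) subrr.
- rewrite /= /m; rewrite (_ : (fun t => [ffun s => x s] t) = x) //.
  by apply: funext => t; rewrite ffunE.
- exists (fun t => g t) => s.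
  have := congr1 (fun F : V => F s) Hg; rewrite /= !ffunE => <-; done.
Qed.

End Solve.

Section Dom.
Variables (R : realType) (S : finType) (pi : S -> R).
Hypothesis Hpi : is_distribution pi.

Lemma sup_lemma K : is_transition K -> reversible pi K ->
  forall x g, (forall s, g s - Top K g s = x s) ->
  forall y, 2 * dot pi x y - qf pi K y <= dot pi x g.
Proof.
move=> HK HrK x g Hg y.
pose h := fun s => g s - y s.
have Hq := qf_ge0 Hpi HK HrK h.
have E1 : (fun s => h s - Top K h s) = (fun s => x s - (y s - Top K y s)).
  apply: funext => s; rewrite /h TopB -Hg; ring.
have E2 : qf pi K h = dot pi h (fun s => h s - Top K h s) by rewrite dotBr.
rewrite E2 E1 {E1 E2} /h dotBr !dotBl !dotBr in Hq.
have E3 : dot pi g (Top K y) = dot pi (Top K g) y by rewrite selfadj.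
have E4 : dot pi x y = dot pi g y - dot pi (Top K g) y.
  by rewrite -dotBl; congr (dot _ _ _); apply: funext => s; rewrite Hg.
rewrite /qf.
have E5 : dot pi y x = dot pi x y by rewrite dot_sym.
have E6 : dot pi g x = dot pi x g by rewrite dot_sym.
have E7 : dot pi y g = dot pi g y by rewrite dot_sym.
lra.
Qed.

Definition good K := [/\ is_transition K, reversible pi K & irreducible K].

Lemma mean0 K (HK : is_transition K) (HrK : reversible pi K) y :
  dot pi (fun _ => 1) (fun s => y s - Top K y s) = 0.
Proof. by rewrite dotBr (dot1T HK HrK) subrr. Qed.

Lemma var_sumE K f N : var_sum pi K f N =
  pathE pi K (fun w : {ffun 'I_N -> S} => Sf f w ^+ 2) - (pathE pi K (@Sf R S N f)) ^+ 2.
Proof. by []. Qed.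

Lemma var_shift K (HK : is_transition K) (HrK : reversible pi K) f c n :
  var_sum pi K (fun s => f s - c) n.+1 = var_sum pi K f n.+1.
Proof.
rewrite !var_sumE /Sf.
set k := c *+ n.+1.
have ES : forall w : {ffun 'I_n.+1 -> S},
    \sum_(i < n.+1) (fun s => f s - c) (w i) = \sum_(i < n.+1) f (w i) - k.
  by move=> w; rewrite sumrB sumr_const card_ord.
rewrite (pathE_eq pi K (g2 := fun w => (\sum_(i < n.+1) f (w i)) ^+ 2 +
       ((- (2 * k)) * \sum_(i < n.+1) f (w i) + k ^+ 2))); last first.
  move=> w; transitivity ((\sum_(i < n.+1) f (w i) - k) ^+ 2); last ring.
  by congr (_ ^+ 2); exact (ES w).
rewrite (pathE_eq pi K (g1 := fun w : {ffun 'I_n.+1 -> S} => \sum_(i < n.+1) (fun s => f s - c) (w i)) (g2 := fun w => \sum_(i < n.+1) f (w i) + (- k))); last first.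
  by move=> w; exact (ES w).
rewrite !pathED pathEZ !(pathE_const Hpi HK HrK).
ring.
Qed.

Lemma asymp_shift K (HK : is_transition K) (HrK : reversible pi K) f c :
  asymp_var pi K (fun s => f s - c) = asymp_var pi K f.
Proof.
rewrite /asymp_var; congr (limn _); apply: funext => -[|n].
  by rewrite invr0 !mulr0.
by rewrite var_shift.
Qed.

Lemma dom_qf K1 K2 : good K1 -> good K2 ->
  (eff_dominates pi K1 K2 <-> forall y, qf pi K2 y <= qf pi K1 y).
Proof.
move=> [HK1 Hr1 Hi1] [HK2 Hr2 Hi2]; split.
- move=> Hd y.
  pose x := fun s => y s - Top K2 y s.
  have Hx0 : dot pi (fun _ => 1) x = 0 by apply: mean0.
  have [g1 Hg1] := poisson_solve Hpi HK1 Hr1 Hi1 Hx0.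
  have [g2 Hg2] := poisson_solve Hpi HK2 Hr2 Hi2 Hx0.
  have := Hd x.
  rewrite (asymp_poisson Hpi HK1 Hr1 Hx0 Hg1) (asymp_poisson Hpi HK2 Hr2 Hx0 Hg2).
  have S1 := sup_lemma HK1 Hr1 Hg1 y.
  have E : dot pi x g2 = qf pi K2 y.
    rewrite {1}/x dotBl -(selfadj Hr2) -dotBr.
    rewrite (_ : (fun s => g2 s - Top K2 g2 s) = x); last by apply: funext => s; rewrite Hg2.
    by rewrite /x dotBr.
  have E' : dot pi x y = qf pi K2 y by rewrite /qf -dotBr dot_sym.
  lra.
- move=> Hq f.
  pose mu := dot pi (fun _ => 1) f.
  pose x := fun s => f s - mu.
  have Hx0 : dot pi (fun _ => 1) x = 0.
    rewrite dotBr /mu; set d := dot _ _ f.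
    rewrite (_ : dot pi (fun _ => 1) (fun _ => d) = d) ?subrr //.
    rewrite /dot (eq_bigr (fun s => pi s * d)) => [|s _]; last by rewrite mulr1.
    by rewrite -big_distrl /= Hpi.2 mul1r.
  rewrite -(asymp_shift HK1 Hr1 f mu) -(asymp_shift HK2 Hr2 f mu) -/x.
  have [g1 Hg1] := poisson_solve Hpi HK1 Hr1 Hi1 Hx0.
  have [g2 Hg2] := poisson_solve Hpi HK2 Hr2 Hi2 Hx0.
  rewrite (asymp_poisson Hpi HK1 Hr1 Hx0 Hg1) (asymp_poisson Hpi HK2 Hr2 Hx0 Hg2).
  have S2 := sup_lemma HK2 Hr2 Hg2 g1.
  have E : qf pi K1 g1 = dot pi x g1.
    rewrite /qf -dotBr dot_sym; congr (dot _ _ _); apply: funext => s; by rewrite Hg1.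
  have := Hq g1.
  lra.
Qed.

End Dom.

Section Mix.
Variables (R : realType) (S : finType) (pi : S -> R).
Implicit Types (a : R) (P Q K : S -> S -> R).

Lemma mix_trans a P Q : is_transition P -> is_transition Q -> 0 <= a -> a <= 1 ->
  is_transition (mix a P Q).
Proof.
move=> [P0 P1] [Q0 Q1] a0 a1; split => [x y|x].
  by rewrite /mix addr_ge0 // mulr_ge0 // ?subr_ge0.
by rewrite /mix big_split /= -!big_distrr /= P1 Q1; ring.
Qed.

Lemma mix_rev a P Q : reversible pi P -> reversible pi Q -> reversible pi (mix a P Q).
Proof.
move=> HP HQ x y; rewrite /mix !mulrDr.
rewrite mulrCA HP mulrCA (mulrCA (pi x)) HQ (mulrCA (pi y)) (mulrCA (pi y) (1 - a)).
by [].
Qed.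

Lemma mpow_ge0' K : is_transition K -> forall n x y, 0 <= mpow K n x y.
Proof.
move=> HK; elim=> [|n IH] x y /=; first by case: (x == y).
by apply: sumr_ge0 => z _; apply: mulr_ge0 => //; apply: HK.1.
Qed.

Lemma mpow_mix a P Q : is_transition P -> is_transition Q -> 0 <= a -> a <= 1 ->
  forall n x y, a ^+ n * mpow P n x y <= mpow (mix a P Q) n x y.
Proof.
move=> HP HQ a0 a1; elim=> [|n IH] x y /=; first by rewrite expr0 mul1r.
rewrite big_distrr /=; apply: ler_sum => z _.
apply: (@le_trans _ _ (mpow (mix a P Q) n x z * (a * P z y))).
  rewrite (_ : _ * _ = (a ^+ n * mpow P n x z) * (a * P z y)); last by rewrite exprS; ring.
  apply: ler_wpM2r; last exact: IH.
  by apply: mulr_ge0 => //; apply: HP.1.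
apply: ler_wpM2l; first exact: (mpow_ge0' (mix_trans HP HQ a0 a1)).
rewrite /mix lerDl mulr_ge0 // ?subr_ge0 //; apply: HQ.1.
Qed.

Lemma mix_irr a P Q : is_transition P -> is_transition Q -> 0 < a -> a <= 1 ->
  irreducible P -> irreducible (mix a P Q).
Proof.
move=> HP HQ a0 a1 HI x y; have [n Hn] := HI x y; exists n.
apply: lt_le_trans (mpow_mix HP HQ (ltW a0) a1 n x y).
by apply: mulr_gt0 => //; apply: exprn_gt0.
Qed.

Lemma dot_lin (u v w : S -> R) (b c : R) :
  dot pi w (fun s => b * u s + c * v s) = b * dot pi w u + c * dot pi w v.
Proof.
rewrite /dot !big_distrr -big_split /=; apply: eq_bigr => s _; ring.
Qed.

Lemma qf_mix a P Q (y : S -> R) : qf pi (mix a P Q) y = a * qf pi P y + (1 - a) * qf pi Q y.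
Proof.
have E : Top (mix a P Q) y = (fun s => a * Top P y s + (1 - a) * Top Q y s).
  apply: funext => s; rewrite /Top /mix !big_distrr -big_split /=.
  apply: eq_bigr => t _; ring.
rewrite /qf E dot_lin; ring.
Qed.

End Mix.

Unset Implicit Arguments.

Theorem theorem4 (R : realType) (S : finType) (pi : S -> R)
  (P P' Q : S -> S -> R) (a : R) :
  is_distribution pi ->
  is_transition P -> is_transition P' -> is_transition Q ->
  reversible pi P -> reversible pi P' -> reversible pi Q ->
  irreducible P -> irreducible P' ->
  0 < a -> a < 1 ->
  (eff_dominates pi P' P <->
   eff_dominates pi (mix a P' Q) (mix a P Q)).
Proof.
move=> Hpi HP HP' HQ HrP HrP' HrQ HiP HiP' a0 a1.
have a1' : a <= 1 by apply: ltW.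
have a0' : 0 <= a by apply: ltW.
have gP : good pi P by rewrite /good; split.
have gP' : good pi P' by rewrite /good; split.
have gmP : good pi (mix a P Q).
  rewrite /good; split; [exact: mix_trans | exact: mix_rev | exact: mix_irr].
have gmP' : good pi (mix a P' Q).
  rewrite /good; split; [exact: mix_trans | exact: mix_rev | exact: mix_irr].
rewrite (dom_qf Hpi gP' gP) (dom_qf Hpi gmP' gmP).
split => H y; have := H y; rewrite ?qf_mix; nra.
Qed.
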